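(* Fix subgroups $s\neq s'$ in $\mathcal S$, a cohort $g\in\{1,\dots,\mathcal T\}$ and a period $t$ with $g\le t\le\mathcal T$. Assume $\mathbb E|Y_\tau(g';\sigma)|<\infty$ for all $\tau,g',\sigma$, and that $P(G=g,S=\sigma)>0$ for $\sigma\in\{s,s'\}$. (a) (Not-yet-treated comparison.) Suppose $P(G>t,S=\sigma)>0$ for $\sigma\in\{s,s'\}$, and: (i) (No anticipation) for every finite cohort $g'$, every $\tau<g'$ and every $\sigma\in\mathcal S$ with $P(G=g',S=\sigma)>0$: $\mathbb E[Y_\tau(g')\mid G=g',S=\sigma]=\mathbb E[Y_\tau(\infty)\mid G=g',S=\sigma]$; (ii) (Parallel gaps, not-yet-treated) $$\mathbb E[Y_t(\infty)-Y_{g-1}(\infty)\mid G=g,S=s]-\mathbb E[Y_t(\infty)-Y_{g-1}(\infty)\mid G=g,S=s']$$ $$=\mathbb E[Y_t(\infty)-Y_{g-1}(\infty)\mid G>t,S=s]-\mathbb E[Y_t(\infty)-Y_{g-1}(\infty)\mid G>t,S=s'].$$ Then $$DATT_{s-s'}(g,t)=\mathbb E[Y_t-Y_{g-1}\mid G=g,S=s]-\mathbb E[Y_t-Y_{g-1}\mid G=g,S=s']-\Big(\mathbb E[Y_t-Y_{g-1}\mid G>t,S=s]-\mathbb E[Y_t-Y_{g-1}\mid G>t,S=s']\Big).$$ (b) (Never-treated comparison.) Suppose $P(G=\infty,S=\sigma)>0$ for $\sigma\in\{s,s'\}$, that (i) holds, and that (ii) holds with the events $\{G>t\}$ replaced by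 $\{G=\infty\}$. Then the same formula holds with $\{G>t\}$ replaced by $\{G=\infty\}$ in the last two conditional expectations.
   Context: Time periods are $t=0,1,\dots,\mathcal T$; $\mathcal S$ is a finite set of subgroups. A unit is described by a random element consisting of: $G\in\{1,\dots,\mathcal T\}\cup\{\infty\}$, the first period in which the unit is treated ($G=\infty$ means never treated; treatment is irreversible, $W_t=\mathbf 1\{G\le t\}$); a subgroup $S\in\mathcal S$; covariates $X$; and real potential outcomes $Y_t(g';\sigma)$ for every period $t$, every possible cohort $g'$ (including $\infty$) and every $\sigma\in\mathcal S$, interpreted as the outcome at $t$ had the unit first been treated at $g'$ and belonged to subgroup $\sigma$. Write $Y_t(g'):=Y_t(g';S)$ and the observed outcome $Y_t:=Y_t(G;S)$. Units are i.i.d. draws (panel data: all $Y_0,\dots,Y_{\mathcal T}$ observed for each unit). The not-yet-treated units at period $t$ are those with $G>t$ (this includes $G=\infty$). Define $$DATT_{s-s'}(g,t):=\mathbb E[Y_t(g)-Y_t(\infty)\mid G=g,S=s]-\mathbb E[Y_t(g)-Y_t(\infty)\mid G=g,S=s'].$$ *)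

(* Defs.v *)
From HB Require Import structures.
From mathcomp Require Import all_boot all_order all_algebra.
From mathcomp Require Import all_classical all_reals all_analysis.
Set Implicit Arguments. Unset Strict Implicit. Unset Printing Implicit Defensive.
Import Order.TTheory GRing.Theory Num.Theory.
Local Open Scope classical_set_scope.
Local Open Scope ring_scope.

(* Cohorts: [Some g] = first treated in period g, [None] = never treated (G = oo). *)
Notation cohort := (option nat).

Definition cohort_gt (t : nat) (c : cohort) : bool :=
  if c is Some k then (t < k)%N else true.

Definition condE {d} {T : measurableType d} {R : realType}
  (P : probability T R) (A : set T) (X : T -> R) : R :=
  Rintegral P A X / fine (P A).

(* Main.v *)
Require Import Defs.
From HB Require Import structures.
From mathcomp Require Import all_boot all_order all_algebra.
From mathcomp Require Import all_classical all_reals all_analysis.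
From mathcomp Require Import ring lra zify.
Import Order.TTheory GRing.Theory Num.Theory.
Local Open Scope classical_set_scope.
Local Open Scope ring_scope.


Lemma integrableU_disj (R : realType) d (T : measurableType d)
  (mu : {measure set T -> \bar R}) (A B : set T) (f : T -> \bar R) :
  measurable A -> measurable B -> [disjoint A & B] ->
  mu.-integrable A f -> mu.-integrable B f -> mu.-integrable (A `|` B) f.
Proof.
move=> mA mB AB iAf iBf.
have /integrableP[mfA iA] := iAf.
have /integrableP[mfB iB] := iBf.
have mf := proj2 (@measurable_funU _ _ T (measurable_realfun.constructive_ereal_extended__canonical__measurable_structure_SigmaRing R) A B f mA mB) (conj mfA mfB).
have mfa := measurable_int _ (integrable_abse iAf).
have mfb := measurable_int _ (integrable_abse iBf).
have mf2 := proj2 (@measurable_funU _ _ T (measurable_realfun.constructive_ereal_extended__canonical__measurable_structure_SigmaRing R) A B _ mA mB) (conj mfa mfb).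
apply/integrableP; split => //.
rewrite (integral_setU _ mA mB mf2 AB).
exact: lte_add_pinfty.
Qed.

Lemma intS_R (R : realType) d (T : measurableType d)
  (mu : {measure set T -> \bar R}) (B : set T) (f : T -> R) :
  measurable B -> mu.-integrable setT (EFin \o f) -> mu.-integrable B (EFin \o f).
Proof. move=> mB; exact: integrableS. Qed.

Lemma intB_R (R : realType) d (T : measurableType d)
  (mu : {measure set T -> \bar R}) (f g : T -> R) :
  mu.-integrable setT (EFin \o f) -> mu.-integrable setT (EFin \o g) ->
  mu.-integrable setT (EFin \o (fun w => f w - g w)).
Proof.
move=> hf hg; apply: eq_integrable (integrableB _ hf hg) => //.
Qed.

Lemma fineP_gt0 (R : realType) d (T : measurableType d) (P : probability T R)
  (A : set T) : measurable A -> (0 < P A)%E -> 0 < fine (P A).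
Proof.
move=> mA h; apply: fine_gt0; rewrite h /=.
exact: (le_lt_trans (probability_le1 P mA) (ltry _)).
Qed.
Arguments integrableU_disj {R d T mu A B f}.
Arguments intS_R {R d T mu B} f.
Arguments intB_R {R d T mu} f g.
Arguments fineP_gt0 {R d T P A}.


Lemma piece_eq (R : realType) d (Omega : measurableType d) (P : probability Omega R)
  (Sg : finType) (G : Omega -> cohort) (S : Omega -> Sg)
  (Y : nat -> cohort -> Sg -> Omega -> R)
  (sig : Sg) (k : nat) (tau : nat)
  (mB : measurable [set w | G w = Some k /\ S w = sig])
  (i1 : P.-integrable setT (fun w => (Y tau (Some k) sig w)%:E))
  (i2 : P.-integrable setT (fun w => (Y tau None sig w)%:E))
  (hNA : (0 < P [set w | G w = Some k /\ S w = sig])%E ->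
     condE P [set w | G w = Some k /\ S w = sig] (fun w => Y tau (Some k) (S w) w) =
     condE P [set w | G w = Some k /\ S w = sig] (fun w => Y tau None (S w) w)) :
  \int[P]_(w in [set w | G w = Some k /\ S w = sig]) Y tau (Some k) sig w =
  \int[P]_(w in [set w | G w = Some k /\ S w = sig]) Y tau None sig w.
Proof.
move: mB hNA; set B := [set w | _ /\ _] => mB hNA.
have [P0|Pn0] := eqVneq (P B) 0%E.
  have j1 := intS_R (fun w => Y tau (Some k) sig w) mB i1; have j2 := intS_R (fun w => Y tau None sig w) mB i2.
  rewrite /Rintegral !null_set_integral //.
  - exact: measurable_int j2.
  - exact: measurable_int j1.
have Pgt : (0 < P B)%E by rewrite lt0e Pn0 measure_ge0.
have e1 : \int[P]_(w in B) Y tau (Some k) (S w) w = \int[P]_(w in B) Y tau (Some k) sig w.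
  by apply: eq_Rintegral => w /set_mem [_ ->].
have e2 : \int[P]_(w in B) Y tau None (S w) w = \int[P]_(w in B) Y tau None sig w.
  by apply: eq_Rintegral => w /set_mem [_ ->].
have := hNA Pgt; rewrite /condE e1 e2.
move=> h; have := congr1 (fun z => z * fine (P B)) h.
have pn0 : fine (P B) != 0 by rewrite gt_eqF // fineP_gt0.
by rewrite /= !divfK.
Qed.
Arguments piece_eq {R d Omega P Sg G S Y sig k tau}.


Definition Aset {Omega Sg : Type} (G : Omega -> cohort) (S : Omega -> Sg)
  (sig : Sg) (t n : nat) : set Omega :=
  [set w | (G w = None \/ exists k, (t < k <= n)%N /\ G w = Some k) /\ S w = sig].

Definition hfun {R : realType} {Omega Sg : Type} (G : Omega -> cohort)
  (Y : nat -> cohort -> Sg -> Omega -> R) (sig : Sg) (t g : nat) (w : Omega) : R :=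
  (Y t (G w) sig w - Y (g - 1)%N (G w) sig w) - (Y t None sig w - Y (g - 1)%N None sig w).

Lemma key_lemma (R : realType) d (Omega : measurableType d) (P : probability Omega R)
  (Sg : finType) (G : Omega -> cohort) (S : Omega -> Sg)
  (Y : nat -> cohort -> Sg -> Omega -> R)
  (hmeas : forall (c : cohort) (sig : Sg),
      measurable [set w | G w = c /\ S w = sig])
  (hint : forall (tau : nat) (c : cohort) (sig : Sg),
      P.-integrable setT (fun w => (Y tau c sig w)%:E))
  (sig : Sg) (t g : nat) (hgt : (g <= t)%N)
  (hNA : forall k tau, (tau < k)%N ->
     (0 < P [set w | G w = Some k /\ S w = sig])%E ->
     condE P [set w | G w = Some k /\ S w = sig] (fun w => Y tau (Some k) (S w) w) =
     condE P [set w | G w = Some k /\ S w = sig] (fun w => Y tau None (S w) w)) :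
  forall n, measurable (Aset G S sig t n) /\
    P.-integrable (Aset G S sig t n) (EFin \o hfun G Y sig t g) /\
    \int[P]_(w in Aset G S sig t n) hfun G Y sig t g w = 0.
Proof.
have iB := fun c => intB_R _ _ (intB_R _ _ (hint t c sig) (hint (g - 1)%N c sig))
   (intB_R _ _ (hint t None sig) (hint (g - 1)%N None sig)).
elim=> [|n [mA [iA IA]]].
  have -> : Aset G S sig t 0 = [set w | G w = None /\ S w = sig].
    apply/seteqP; split => w [hw hs]; split => //; last by left.
    by case: hw => // -[k [hk _]]; move: hk; lia.
  have m0 := hmeas None sig.
  split; first exact: m0.
  split.
    apply: (eq_integrable m0 _ _ _ (intS_R _ m0 (iB None))) => w /set_mem [hw _] /=.
    by rewrite /hfun hw.
  rewrite (@eq_Rintegral _ _ _ _ _ (fun _ => 0)); last first.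
    by move=> w /set_mem [hw _]; rewrite /hfun hw subrr.
  by rewrite Rintegral_cst // mul0r.
case: (ltnP t n.+1) => htn; last first.
  have -> : Aset G S sig t n.+1 = Aset G S sig t n; last by [].
  apply/seteqP; split => w [hw hs]; split => //.
    case: hw => [->|[k [hk hGk]]]; first by left.
    by move: hk htn; lia.
  case: hw => [->|[k [hk hGk]]]; first by left.
  by right; exists k; split => //; move: hk; lia.
set B := [set w | G w = Some n.+1 /\ S w = sig].
have mB : measurable B := hmeas (Some n.+1) sig.
have eA : Aset G S sig t n.+1 = Aset G S sig t n `|` B.
  rewrite /Aset; apply/seteqP; split => w /=.
    move=> [hw hs]; case: hw => [->|[k [hk hGk]]]; first by left; split => //; left.
    have [kn|kn] := leqP k n.
      by left; split => //; right; exists k; split => //; move: hk kn; lia.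
    by right; split => //; rewrite hGk; congr Some; move: hk kn; lia.
  move=> [[hw hs]|[hw hs]]; split => //.
    case: hw => [->|[k [hk hGk]]]; first by left.
    by right; exists k; split => //; move: hk; lia.
  by right; exists n.+1; split => //; move: htn; lia.
have dAB : [disjoint Aset G S sig t n & B].
  apply/disj_setPS => w [[hw _] [hb _]]; move: hw; rewrite hb.
  by case => // -[k [hk [hk']]]; move: hk; rewrite -hk'; lia.
have iBh : P.-integrable B (EFin \o hfun G Y sig t g).
  apply: (eq_integrable mB _ _ _ (intS_R _ mB (iB (Some n.+1)))) => w /set_mem [hw _] /=.
  by rewrite /hfun hw.
rewrite eA; split; first exact: measurableU.
have iU := integrableU_disj mA mB dAB iA iBh.
split => //.
rewrite Rintegral_setU // IA add0r.
have i1 := intS_R _ mB (hint t (Some n.+1) sig).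
have i2 := intS_R _ mB (hint (g - 1)%N (Some n.+1) sig).
have i3 := intS_R _ mB (hint t None sig).
have i4 := intS_R _ mB (hint (g - 1)%N None sig).
rewrite (@eq_Rintegral _ _ _ _ B (fun w => (Y t (Some n.+1) sig w - Y (g - 1)%N (Some n.+1) sig w) - (Y t None sig w - Y (g - 1)%N None sig w))); last first.
  by move=> w /set_mem [hw _]; rewrite /hfun hw.
rewrite RintegralB //; last 2 first.
- exact: intS_R _ mB (intB_R _ _ (hint t (Some n.+1) sig) (hint (g - 1)%N (Some n.+1) sig)).
- exact: intS_R _ mB (intB_R _ _ (hint t None sig) (hint (g - 1)%N None sig)).
rewrite !RintegralB //.
rewrite (piece_eq mB (hint t (Some n.+1) sig) (hint t None sig) (hNA n.+1 t htn)).
have hg1 : (g - 1 < n.+1)%N by move: hgt htn; lia.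
rewrite (piece_eq mB (hint (g-1)%N (Some n.+1) sig) (hint (g-1)%N None sig) (hNA n.+1 (g-1)%N hg1)).
by rewrite subrr.
Qed.
Arguments key_lemma {R d Omega P Sg G S Y} hmeas hint sig t g hgt hNA n.

Theorem proposition1
  (R : realType) (d : measure_display) (Omega : measurableType d)
  (P : probability Omega R)
  (Tm : nat) (Sg : finType)
  (G : Omega -> cohort) (S : Omega -> Sg)
  (Y : nat -> cohort -> Sg -> Omega -> R)
  (hG : forall w, match G w with Some k => (1 <= k <= Tm)%N | None => true end)
  (hmeas : forall (c : cohort) (sig : Sg),
      measurable [set w | G w = c /\ S w = sig])
  (hint : forall (tau : nat) (c : cohort) (sig : Sg),
      P.-integrable setT (fun w => (Y tau c sig w)%:E))
  (s s' : Sg) (hss' : s != s')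
  (g t : nat) (hg : (1 <= g <= Tm)%N) (hgt : (g <= t <= Tm)%N)
  (hpos : forall sig, sig = s \/ sig = s' ->
      (0 < P [set w | G w = Some g /\ S w = sig])%E) :
  let Ypot := fun (tau : nat) (c : cohort) (w : Omega) => Y tau c (S w) w in
  let Yobs := fun (tau : nat) (w : Omega) => Y tau (G w) (S w) w in
  let NA := forall (g' : nat) (tau : nat) (sig : Sg),
      (1 <= g' <= Tm)%N -> (tau < g')%N ->
      (0 < P [set w | G w = Some g' /\ S w = sig])%E ->
      condE P [set w | G w = Some g' /\ S w = sig] (Ypot tau (Some g')) =
      condE P [set w | G w = Some g' /\ S w = sig] (Ypot tau None) in
  let evG := fun sig => [set w | G w = Some g /\ S w = sig] in
  let DATT :=
      condE P (evG s) (fun w => Ypot t (Some g) w - Ypot t None w)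
    - condE P (evG s') (fun w => Ypot t (Some g) w - Ypot t None w) in
  let gap0 := fun w => Ypot t None w - Ypot (g - 1)%N None w in
  let gapO := fun w => Yobs t w - Yobs (g - 1)%N w in
  (* (a) not-yet-treated comparison group *)
  (let evC := fun sig => [set w | cohort_gt t (G w) /\ S w = sig] in
   (forall sig, sig = s \/ sig = s' -> (0 < P (evC sig))%E) ->
   NA ->
   condE P (evG s) gap0 - condE P (evG s') gap0 =
     condE P (evC s) gap0 - condE P (evC s') gap0 ->
   DATT = condE P (evG s) gapO - condE P (evG s') gapO
          - (condE P (evC s) gapO - condE P (evC s') gapO))
  /\
  (* (b) never-treated comparison group *)
  (let evC := fun sig => [set w | G w = None /\ S w = sig] in
   (forall sig, sig = s \/ sig = s' -> (0 < P (evC sig))%E) ->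
   NA ->
   condE P (evG s) gap0 - condE P (evG s') gap0 =
     condE P (evC s) gap0 - condE P (evC s') gap0 ->
   DATT = condE P (evG s) gapO - condE P (evG s') gapO
          - (condE P (evC s) gapO - condE P (evC s') gapO)).
Proof.
move=> Ypot Yobs NA evG DATT gap0 gapO.
have mG : forall sig, measurable (evG sig) := fun sig => hmeas (Some g) sig.
have Gpart : NA -> forall sig, sig = s \/ sig = s' ->
    condE P (evG sig) gapO - condE P (evG sig) gap0 =
    condE P (evG sig) (fun w => Ypot t (Some g) w - Ypot t None w).
  move=> hNA sig hsig.
  have i := fun tau c => intS_R _ (mG sig) (hint tau c sig).
  have e1 : \int[P]_(w in evG sig) gapO w =
      \int[P]_(w in evG sig) (Y t (Some g) sig w - Y (g - 1)%N (Some g) sig w).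
    by apply: eq_Rintegral => w /set_mem [hw hs]; rewrite /gapO /Yobs hw hs.
  have e2 : \int[P]_(w in evG sig) gap0 w =
      \int[P]_(w in evG sig) (Y t None sig w - Y (g - 1)%N None sig w).
    by apply: eq_Rintegral => w /set_mem [hw hs]; rewrite /gap0 /Ypot hs.
  have e3 : \int[P]_(w in evG sig) (Ypot t (Some g) w - Ypot t None w) =
      \int[P]_(w in evG sig) (Y t (Some g) sig w - Y t None sig w).
    by apply: eq_Rintegral => w /set_mem [hw hs]; rewrite /Ypot hs.
  have hga : (g - 1 < g)%N by move: hg; lia.
  have hgb : (1 <= g <= Tm)%N by [].
  have := hNA g (g - 1)%N sig hgb hga (hpos sig hsig).
  rewrite /condE /Ypot.
  have e4 : \int[P]_(w in [set w | G w = Some g /\ S w = sig]) Y (g - 1)%N (Some g) (S w) w =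
      \int[P]_(w in evG sig) Y (g - 1)%N (Some g) sig w.
    by apply: eq_Rintegral => w /set_mem [hw hs]; rewrite hs.
  have e5 : \int[P]_(w in [set w | G w = Some g /\ S w = sig]) Y (g - 1)%N None (S w) w =
      \int[P]_(w in evG sig) Y (g - 1)%N None sig w.
    by apply: eq_Rintegral => w /set_mem [hw hs]; rewrite hs.
  rewrite e4 e5 => hb.
  rewrite -/(Ypot t (Some g)) -/(Ypot t None).
  rewrite e1 e2 e3 !RintegralB //.
  rewrite !mulrBl hb.
  ring.
have NA' : NA -> forall sig k tau, (tau < k)%N ->
     (0 < P [set w | G w = Some k /\ S w = sig])%E ->
     condE P [set w | G w = Some k /\ S w = sig] (fun w => Y tau (Some k) (S w) w) =
     condE P [set w | G w = Some k /\ S w = sig] (fun w => Y tau None (S w) w).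
  move=> hNA sig k tau htk hP.
  have [[w [hw _]]|nw] := pselect (exists w, G w = Some k /\ S w = sig).
    have := hG w; rewrite hw => hk.
    exact: (hNA k tau sig hk htk hP).
  have e0 : [set w | G w = Some k /\ S w = sig] = set0.
    by apply/seteqP; split => w // hw; apply: nw; exists w.
  by move: hP; rewrite e0 measure0 ltxx.
have final : forall (evC : Sg -> set Omega),
    (forall sig, sig = s \/ sig = s' ->
      condE P (evC sig) gapO = condE P (evC sig) gap0) ->
    NA ->
    condE P (evG s) gap0 - condE P (evG s') gap0 =
      condE P (evC s) gap0 - condE P (evC s') gap0 ->
    DATT = condE P (evG s) gapO - condE P (evG s') gapO
           - (condE P (evC s) gapO - condE P (evC s') gapO).
  move=> evC hC hNA hpar.
  rewrite /DATT -(Gpart hNA s (or_introl erefl)) -(Gpart hNA s' (or_intror erefl)).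
  rewrite (hC s (or_introl erefl)) (hC s' (or_intror erefl)).
  lra.
split.
  move=> evC _ hNA hpar; apply: final => // sig _.
  have [mA [iA IA]] := key_lemma hmeas hint sig t g (proj1 (andP hgt)) (NA' hNA sig) Tm.
  have eC : evC sig = Aset G S sig t Tm.
    rewrite /evC /Aset; apply/seteqP; split => w /= [hw hs]; split => //.
      have := hG w; move: hw; case: (G w) => [k|] /= hk hk'; last by left.
      by right; exists k; split => //; move: hk hk'; lia.
    case: hw => [->//|[k [hk ->]]] /=; move: hk; lia.
  rewrite /condE eC; congr (_ / _).
  have i0 := intS_R _ mA (intB_R _ _ (hint t None sig) (hint (g - 1)%N None sig)).
  rewrite (@eq_Rintegral _ _ _ _ _ (fun w => hfun G Y sig t g w + (Y t None sig w - Y (g - 1)%N None sig w))); last first.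
    by move=> w /set_mem [_ hs]; rewrite /gapO /Yobs /hfun hs; ring.
  rewrite RintegralD // IA add0r.
  by apply: eq_Rintegral => w /set_mem [_ hs]; rewrite /gap0 /Ypot hs.
move=> evC _ hNA hpar; apply: final => // sig _.
rewrite /condE; congr (_ / _).
by apply: eq_Rintegral => w /set_mem [hw hs]; rewrite /gapO /gap0 /Yobs /Ypot hw hs.
Qed.
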